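(* Let $q\ge2$ and let $T$ be a connected, complete and deterministic transducer with input alphabet $\{0,\dots,q-1\}$, real output labels, an initial state, and a real final output at every state. For a nonnegative integer $n$, let $g(n)$ be the output sum of $T$ on input the $q$-ary expansion of $n$. Let $r$ be a nonnegative integer and suppose: (1) from every state, reading the input $0^r$ ($r$ zeros) leads to the initial state; (2) for every state $s$, the sum of the output labels along the path reading $0^r$ starting at $s$ equals the final output of $s$; (3) appending additional zeros at the end of the input sequence (i.e. after the most significant digit) does not change the output sum. Then $g$ is $q$-quasiadditive with parameter $r$, i.e. $g(q^{k+r}a+b)=g(a)+g(b)$ for all nonnegative integers $a,b,k$ with $0\le b<q^k$.
   Context: A transducer consists of a finite set of states, an initial state, the input alphabet $\{0,\dots,q-1\}$, an output alphabet which is a set of real numbers, transitions between states labelled $\varepsilon\mid\delta$ with $\varepsilon$ an input letter and $\delta$ an output letter, and a final output (a real number) for each state. It is complete and deterministic if for every state $s$ and input letter $\varepsilon$ there is exactly one transition leaving $s$ with input label $\varepsilon$. The transducer reads an input word (for an integer $n$: its $q$-ary expansion, starting from the least significant digit) along the unique path starting at the initial state with these input labels; the output sum is the sum of the output labels along this path plus the final output of the state where the path ends. Connected refers to the underlying graph of states and transitions. *)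

(* Defs.v *)
From HB Require Import structures.
From mathcomp Require Import all_boot all_order all_algebra.
From mathcomp Require Import reals.
Set Implicit Arguments.
Unset Strict Implicit.
Unset Printing Implicit Defensive.
Import Order.TTheory GRing.Theory Num.Theory.
Local Open Scope ring_scope.

(* Completeness and determinism
   are built in: the transition and output labels are total functions. *)
Record transducer (R : realType) (q : nat) := Transducer {
  state : finType;
  init : state;
  trans : state -> 'I_q -> state;
  out : state -> 'I_q -> R;
  final : state -> R
}.

Section Defs.
Variables (R : realType) (q : nat) (T : transducer R q).

Fixpoint end_state (s : state T) (w : seq 'I_q) : state T :=
  if w is a :: w' then end_state (trans s a) w' else s.

Fixpoint path_out (s : state T) (w : seq 'I_q) : R :=
  if w is a :: w' then out s a + path_out (trans s a) w' else 0.

Definition output_sum (w : seq 'I_q) : R :=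
  path_out (init T) w + final (end_state (init T) w).

Definition edge_rel : rel (state T) :=
  fun s t => [exists a : 'I_q, trans s a == t] || [exists a : 'I_q, trans t a == s].

Definition connected_transducer : Prop :=
  forall s t : state T, connect edge_rel s t.

End Defs.

(* q-ary expansion (least significant digit first) of n, as a list of nats;
   the expansion of 0 is the empty word. *)
Fixpoint digits_aux (q fuel n : nat) : seq nat :=
  if fuel is fuel'.+1 then
    (if n == 0%N then [::] else (n %% q)%N :: digits_aux q fuel' (n %/ q)%N)
  else [::].

Definition digits (q n : nat) : seq nat := digits_aux q n.+1 n.

(* the same expansion as a word over the input alphabet 'I_q (for q >= 2
   every digit is < q, so pmap insub drops nothing) *)
Definition qword (q n : nat) : seq 'I_q := pmap insub (digits q n).

Definition zero_word (q : nat) (w : seq 'I_q) : bool :=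
  all (fun a : 'I_q => nat_of_ord a == 0%N) w.

Definition tsum (R : realType) (q : nat) (T : transducer R q) (n : nat) : R :=
  output_sum T (qword q n).

(* Main.v *)
Require Import Defs.
From HB Require Import structures.
From mathcomp Require Import all_boot all_order all_algebra.
From mathcomp Require Import reals.
From mathcomp Require Import zify.
Import Order.TTheory GRing.Theory Num.Theory.
Local Open Scope ring_scope.

Lemma digits_aux_eq q : (1 < q)%N -> forall f f' n, (n < f)%N -> (n < f')%N ->
  digits_aux q f n = digits_aux q f' n.
Proof.
move=> hq; elim=> [|f IH] [|f'] n //= hf hf'.
case: eqP => // /eqP n0; congr (_ :: _); apply: IH.
  apply: leq_trans (ltn_Pdiv hq _) _; [lia|lia].
apply: leq_trans (ltn_Pdiv hq _) _; [lia|lia].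
Qed.

Lemma digitsE q n : (1 < q)%N -> digits q n = if n == 0%N then [::] else (n %% q)%N :: digits q (n %/ q)%N.
Proof.
move=> hq; have E := @digits_aux_eq q hq n (n %/ q).+1 (n %/ q).
rewrite {1}/digits [LHS]/=; case: eqP => // /eqP n0; congr (_ :: _).
apply: E => //; apply: leq_trans (ltn_Pdiv hq _) _; lia.
Qed.

Lemma digits_cat q a : (1 < q)%N -> (0 < a)%N -> forall m b, (b < q ^ m)%N ->
  digits q (q ^ m * a + b) = digits q b ++ nseq (m - size (digits q b)) 0%N ++ digits q a.
Proof.
move=> hq ha; elim=> [|m IH] b hb.
  have -> : b = 0%N by rewrite expn0 in hb; lia.
  by rewrite expn0 mul1n addn0 (@digitsE q 0%N hq).
have q0 : (0 < q)%N by lia.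
have eqN : (q ^ m.+1 * a + b = (q ^ m * a + b %/ q) * q + b %% q)%N.
  set u := (b %/ q)%N; set v := (b %% q)%N; rewrite {1}(divn_eq b q) -/u -/v expnS; clearbody u v; nia.
have hbq : (b %/ q < q ^ m)%N by rewrite ltn_divLR // -expnSr.
rewrite (@digitsE q _ hq) eqN modnMDl divnMDl // modn_mod (divn_small (ltn_pmod b q0)) addn0.
have -> : ((q ^ m * a + b %/ q) * q + b %% q == 0)%N = false.
  apply/negbTE; have : (0 < q ^ m)%N by rewrite expn_gt0 q0.
  move=> h; apply/eqP => h'; have : (q ^ m * a > 0)%N by rewrite muln_gt0 h ha.
  lia.
rewrite IH //.
case: (eqVneq b 0%N) => [->|b0].
  by rewrite div0n mod0n (@digitsE q 0%N hq) /= subn0.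
by rewrite [digits q b](@digitsE q _ hq) (negbTE b0) /= subSS.
Qed.

Lemma path_out_cat (R : realType) q (T : transducer R q) (s : state T) u v :
  path_out s (u ++ v) = path_out s u + path_out (end_state s u) v.
Proof. by elim: u s => [|x u IH] s /=; rewrite ?add0r // IH addrA. Qed.

Lemma end_state_cat (R : realType) q (T : transducer R q) (s : state T) u v :
  end_state s (u ++ v) = end_state (end_state s u) v.
Proof. by elim: u s => [|x u IH] s //=. Qed.

Definition Zw q j : seq 'I_q := pmap insub (nseq j 0%N).

Lemma Zw_size q j : (0 < q)%N -> size (Zw q j) = j.
Proof. by move=> q0; elim: j => //= j IH; rewrite /Zw /= insubT /= -/(Zw q j) IH. Qed.

Lemma Zw_zero q j : (0 < q)%N -> zero_word (Zw q j).
Proof. by move=> q0; elim: j => //= j IH; rewrite /Zw /= insubT /= -/(Zw q j). Qed.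

Theorem proposition10 (R : realType) (q : nat) (hq : (2 <= q)%N)
  (T : transducer R q) (r : nat)
  (hconn : connected_transducer T)
  (h1 : forall (s : state T) (w : seq 'I_q),
      size w = r -> zero_word w -> end_state s w = init T)
  (h2 : forall (s : state T) (w : seq 'I_q),
      size w = r -> zero_word w -> path_out s w = final s)
  (h3 : forall (n : nat) (w : seq 'I_q),
      zero_word w -> output_sum T (qword q n ++ w) = output_sum T (qword q n)) :
  forall a b k : nat, (b < q ^ k)%N ->
    tsum T (q ^ (k + r) * a + b)%N = tsum T a + tsum T b.
Proof.
move=> a b k hb.
have q0 : (0 < q)%N by lia.
have hZs := Zw_size q r q0; have hZz := Zw_zero q r q0.
have q0w : qword q 0 = [::] by [].
case: (posnP a) => [->|ha].
  rewrite muln0 add0n.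
  have := h3 0%N _ hZz; rewrite q0w /= /output_sum /= h1 // h2 //.
  rewrite /tsum q0w /output_sum /= => /eqP; rewrite add0r -subr_eq0 addrK => /eqP ->.
  by rewrite !add0r.
have hd : digits q (q ^ (k + r) * a + b) =
   digits q b ++ nseq (k - size (digits q b)) 0%N ++ nseq r 0%N ++ digits q a.
  rewrite expnD -mulnA digits_cat //; last by rewrite muln_gt0 expn_gt0 q0.
  by rewrite -[(q ^ r * a)%N]addn0 digits_cat // ?expn_gt0 ?q0 // (@digitsE q 0%N hq) /= subn0.
rewrite /tsum /qword hd !pmap_cat -/(Zw q r) -/(Zw q _) -/(qword q a) -/(qword q b).
set Z1 := Zw q _.
rewrite catA catA /output_sum !path_out_cat !end_state_cat (h1 _ (Zw q r)) // (h2 _ (Zw q r)) //.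
have := h3 b Z1 (Zw_zero q _ q0); rewrite /output_sum path_out_cat end_state_cat => <-.
by rewrite [RHS]addrC -!addrA.
Qed.
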